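(* Consider the vehicle platoon model described in the context, with communication attempt times $\mathcal S=\{s_0,s_1,\ldots\}$, $s_j=jT$, and the time-discretized braking model, and let $0\le t_0<t_1<t_2<\cdots$ be simulation time instants with $\mathcal T\triangleq\{t_0,t_1,t_2,\ldots\}$. If $\mathcal S\subseteq\mathcal T$ and there exists $\alpha>0$ such that for every $k\in\mathbb{N}_0$ $$t_{k+1}-t_k\le \frac{1}{\|A_{\mathrm c}\|}\ln\!\left(\frac{\alpha}{\sqrt2\left(\|x(t_k)\|+\frac{\|B_{\mathrm c}u(t_k)\|}{\|A_{\mathrm c}\|}\right)}+1\right),$$ then $$|d_i(t)-d_i(t_k)|\le\alpha\quad\text{for all }t\in[t_k,t_{k+1}),$$ for every $k\in\mathbb{N}_0$ and every $i\in\{2,3,\ldots,n\}$, where $d_i(t)=p_{i-1}(t)-p_i(t)-L_i$.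
   Context: $\|\cdot\|$ denotes the Euclidean norm and the induced matrix norm. Fix $n\in\mathbb{N}$, $n\ge 2$, constants $\tau_{\mathrm d}>0$, $h>0$, $k_{\mathrm p},k_{\mathrm d}\in\mathbb{R}$, vehicle lengths $L_i>0$, standstill distance $r>0$, communication period $T>0$. Communication attempts happen at $s_j=jT$, $j\in\mathbb{N}_0$; for $i\in\{1,\ldots,n-1\}$, $j\in\mathbb{N}$, $l^i_j\in\{0,1\}$ are arbitrary failure indicators ($1$ = failure, $0$ = success). State: $x(t)=[x_0^\top,x_1^\top,\ldots,x_n^\top]^\top\in\mathbb{R}^{3+6n}$, $x_0=[p_0,v_0,a_0]^\top$ (virtual reference vehicle), $x_i=[e_i,\dot e_i,p_i,v_i,a_i,u_i]^\top$ for $i=1,\ldots,n$ (position, velocity, acceleration, desired acceleration; spacing error $e_i=(p_{i-1}-p_i-L_i)-(r+hv_i)$ and its derivative as state components). Input: $u(t)=[u_0(t),\hat u_0(t),\ldots,\hat u_{n-1}(t)]^\top\in\mathbb{R}^{1+n}$, $\hat u_0=u_0$, and for $i\in\{1,\ldots,n-1\}$: $\hat u_i(s_0)=u_i(s_0)$; for $j\in\mathbb{N}$, $\hat u_i(s_j)=\hat u_i(s_{j-1})$ if $l^i_j=1$, $\hat u_i(s_j)=u_i(s_j)$ if $l^i_j=0$; $\hat u_i(t)=\hat u_i(s_j)$ for $t\in(s_j,s_{j+1})$. Dynamics: $\dot x=A_{\mathrm c}x+B_{\mathrm c}u$, $A_{\mathrm c}$ block lower-bidiagonal with diagonal blocks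 $M,N,\ldots,N$, block below $M$ equal to $G$, remaining subdiagonal blocks $H$; $B_{\mathrm c}=\mathrm{blockdiag}(E,F,\ldots,F)$; here $M=\begin{bmatrix}0&1&0\\0&0&1\\0&0&-1/\tau_{\mathrm d}\end{bmatrix}$, $N=\begin{bmatrix}0&0&0&-1&-h&0\\0&0&0&0&h/\tau_{\mathrm d}-1&-h/\tau_{\mathrm d}\\0&0&0&1&0&0\\0&0&0&0&1&0\\0&0&0&0&-1/\tau_{\mathrm d}&1/\tau_{\mathrm d}\\k_{\mathrm p}/h&k_{\mathrm d}/h&0&0&0&-1/h\end{bmatrix}$, $G\in\mathbb{R}^{6\times3}$ with $G_{12}=G_{23}=1$, other entries $0$; $H\in\mathbb{R}^{6\times6}$ with $H_{14}=H_{25}=1$, other entries $0$; $E=[0,0,1/\tau_{\mathrm d}]^\top$, $F=[0,0,0,0,0,1/h]^\top$. Time-discretized braking model: $t_{\mathrm{brake}}>0$, $\gamma>0$, $0<\eta\le1/(4\tau_{\mathrm d})$. Let $(\bar p_0,\bar v_0,\bar a_0)$ solve $\dot{\bar p}_0=\bar v_0$, $\dot{\bar v}_0=\bar a_0$, $\dot{\bar a}_0=(-\bar a_0+\bar u_0)/\tau_{\mathrm d}$ with $\bar u_0(t)=0$ for $t<t_{\mathrm{brake}}$ and $\bar u_0(t)=\max\{-\gamma,-\eta\bar v_0(t)\}$ for $t\ge t_{\mathrm{brake}}$; $t^*=\min\{t\ge t_{\mathrm{brake}}:-\eta\bar v_0(t)\ge-\gamma\}$; $\lambda_{1,2}=\frac{-1\pm\sqrt{1-4\eta\tau_{\mathrm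 d}}}{2\tau_{\mathrm d}}$, $\lambda_3=-\frac1{2\tau_{\mathrm d}}$, $\beta_2=\frac{\bar a_0(t^* )-\lambda_2\gamma/\eta}{\lambda_1-\lambda_2}$, $\beta_3=\frac{\lambda_1\gamma/\eta-\bar a_0(t^* )}{\lambda_1-\lambda_2}$, $\beta_4=\gamma/\eta$, $\beta_5=\bar a_0(t^* )+2\gamma$. Then $u_0(t)=u_{0,k}$ on $[s_k,s_{k+1})$ with $u_{0,k}=0$ if $kT<t_{\mathrm{brake}}$; $-\gamma$ if $t_{\mathrm{brake}}\le kT<t^*$; $-\eta(\beta_2e^{\lambda_1(kT-t^* )}+\beta_3e^{\lambda_2(kT-t^* )})$ if $kT\ge t^*$, $\eta<\frac1{4\tau_{\mathrm d}}$; $-\eta e^{\lambda_3(kT-t^* )}(\beta_4+\beta_5(kT-t^* ))$ if $kT\ge t^*$, $\eta=\frac1{4\tau_{\mathrm d}}$. *)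

(* Defs.v *)
From HB Require Import structures.
From mathcomp Require Import all_boot all_order all_algebra.
From mathcomp Require Import all_classical all_reals all_analysis.
Set Implicit Arguments. Unset Strict Implicit. Unset Printing Implicit Defensive.
Import Order.TTheory GRing.Theory Num.Theory.
Import numFieldNormedType.Exports.
Local Open Scope classical_set_scope.
Local Open Scope ring_scope.

Section Platoon.
Variable R : realType.

Definition enorm (m : nat) (v : 'cV[R]_m) : R :=
  Num.sqrt (\sum_(i < m) v i ord0 ^+ 2).

Definition opnorm (m p : nat) (A : 'M[R]_(m, p)) : R :=
  sup [set enorm (A *m v) | v in [set v : 'cV[R]_p | enorm v <= 1]].

Definition sdim (n : nat) : nat := (6 * n).+3.
Definition idim (n : nat) : nat := n.+1.

Definition vcomp (m : nat) (v : 'cV[R]_m.+1) (k : nat) : R := v (inord k) ord0.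

(* 0-based state index of component c (0..5 = e, edot, p, v, a, u)
   of vehicle i (i = 1..n);  reference vehicle: 0 = p0, 1 = v0, 2 = a0 *)
Definition vidx (i c : nat) : nat := (3 + 6 * (i - 1) + c)%N.
Definition pidx (i : nat) : nat := if i == 0%N then 0%N else vidx i 2.
Definition e_idx (i : nat) := vidx i 0.
Definition ed_idx (i : nat) := vidx i 1.
Definition v_idx (i : nat) : nat := if i == 0%N then 1%N else vidx i 3.
Definition a_idx (i : nat) : nat := if i == 0%N then 2%N else vidx i 4.
Definition u_idx (i : nat) := vidx i 5.

Definition blk (k : nat) : nat * nat :=
  (if k < 3 then (0, k) else (((k - 3) %/ 6).+1, (k - 3) %% 6))%N.

Definition Mf (tau : R) (a b : nat) : R :=
  match a, b with
  | 0, 1 => 1 | 1, 2 => 1 | 2, 2 => - 1 / tau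
  | _, _ => 0 end.

Definition Nf (tau h kp kd : R) (a b : nat) : R :=
  match a, b with
  | 0, 3 => -1 | 0, 4 => - h
  | 1, 4 => h / tau - 1 | 1, 5 => - (h / tau)
  | 2, 3 => 1
  | 3, 4 => 1
  | 4, 4 => - 1 / tau | 4, 5 => 1 / tau
  | 5, 0 => kp / h | 5, 1 => kd / h | 5, 5 => - 1 / h
  | _, _ => 0 end.

Definition Gf (a b : nat) : R :=
  match a, b with 0, 1 => 1 | 1, 2 => 1 | _, _ => 0 end.

Definition Hf (a b : nat) : R :=
  match a, b with 0, 3 => 1 | 1, 4 => 1 | _, _ => 0 end.

Definition Ef (tau : R) (a : nat) : R := if a == 2%N then 1 / tau else 0.
Definition Ff (h : R) (a : nat) : R := if a == 5%N then 1 / h else 0.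

Definition Ac (n : nat) (tau h kp kd : R) : 'M[R]_(sdim n) :=
  \matrix_(i, j)
    let: (bi, ri) := blk i in let: (bj, rj) := blk j in
    if (bi == 0%N) && (bj == 0%N) then Mf tau ri rj
    else if bi == bj then Nf tau h kp kd ri rj
    else if (bi == 1%N) && (bj == 0%N) then Gf ri rj
    else if bi == bj.+1 then Hf ri rj
    else 0.

Definition Bc (n : nat) (tau h : R) : 'M[R]_(sdim n, idim n) :=
  \matrix_(i, c)
    let: (bi, ri) := blk i in
    if bi == 0%N then (if (c : nat) == 0%N then Ef tau ri else 0)
    else if (c : nat) == bi then Ff h ri else 0.

Definition sidx (T t : R) : nat := Num.truncn (t / T).

Definition u0k (tau T tbrake gamma eta ts a0ts : R) (k : nat) : R :=
  let s := k%:R * T in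
  let lam1 := (-1 + Num.sqrt (1 - 4 * eta * tau)) / (2 * tau) in
  let lam2 := (-1 - Num.sqrt (1 - 4 * eta * tau)) / (2 * tau) in
  let lam3 := - (1 / (2 * tau)) in
  let beta2 := (a0ts - lam2 * gamma / eta) / (lam1 - lam2) in
  let beta3 := (lam1 * gamma / eta - a0ts) / (lam1 - lam2) in
  let beta4 := gamma / eta in
  let beta5 := a0ts + 2 * gamma in
  if s < tbrake then 0
  else if s < ts then - gamma
  else if eta < 1 / (4 * tau) then
    - eta * (beta2 * expR (lam1 * (s - ts)) + beta3 * expR (lam2 * (s - ts)))
  else - eta * expR (lam3 * (s - ts)) * (beta4 + beta5 * (s - ts)).

Fixpoint uhat (n : nat) (x : R -> 'cV[R]_(sdim n)) (T : R)
    (l : nat -> nat -> bool) (i j : nat) : R :=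
  match j with
  | 0 => vcomp (x 0) (u_idx i)
  | j'.+1 => if l i j then uhat x T l i j'
             else vcomp (x (j%:R * T)) (u_idx i)
  end.

(* input vector u(t) = [u_0, hat u_0 (= u_0), hat u_1, ..., hat u_{n-1}] *)
Definition uin (n : nat) (x : R -> 'cV[R]_(sdim n)) (tau T tbrake gamma eta ts a0ts : R)
    (l : nat -> nat -> bool) (t : R) : 'cV[R]_(idim n) :=
  \col_(c < idim n)
    let u0 := u0k tau T tbrake gamma eta ts a0ts (sidx T t) in
    if ((c : nat) <= 1)%N then u0 else uhat x T l (c.-1) (sidx T t).

Definition dgap (n : nat) (x : R -> 'cV[R]_(sdim n)) (L : nat -> R) (i : nat) (t : R) : R :=
  vcomp (x t) (pidx i.-1) - vcomp (x t) (pidx i) - L i.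

End Platoon.

(* Main.v *)
Require Import Defs.
From HB Require Import structures.
From mathcomp Require Import all_boot all_order all_algebra.
From mathcomp Require Import all_classical all_reals all_analysis.
From mathcomp Require Import ring lra zify.
Import Order.TTheory GRing.Theory Num.Theory.
Import numFieldNormedType.Exports.
Local Open Scope classical_set_scope.
Local Open Scope ring_scope.
Set Warnings "-all".
Section Helpers.
Local Set Implicit Arguments.
Context {R : realType}.
Implicit Types (m : nat).

Lemma sumsq_ge0 m (v : 'cV[R]_m) : 0 <= \sum_(i < m) v i ord0 ^+ 2.
Proof. by apply: sumr_ge0 => i _; rewrite sqr_ge0. Qed.

Lemma enorm_ge0 m (v : 'cV[R]_m) : 0 <= enorm v.
Proof. exact: sqrtr_ge0. Qed.

Lemma enorm_sq m (v : 'cV[R]_m) : enorm v ^+ 2 = \sum_(i < m) v i ord0 ^+ 2.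
Proof. by rewrite /enorm sqr_sqrtr // sumsq_ge0. Qed.

Lemma sumsq0 m (v : 'cV[R]_m) : \sum_(i < m) v i ord0 ^+ 2 = 0 -> forall i, v i ord0 = 0.
Proof.
move=> H i; have := psumr_eq0P (P := predT) (fun j _ => sqr_ge0 (v j ord0)) H (i:=i) isT.
by move/eqP; rewrite sqrf_eq0 => /eqP.
Qed.

Lemma CS m (v w : 'cV[R]_m) :
  \sum_(i < m) v i ord0 * w i ord0 <= enorm v * enorm w.
Proof.
set P := \sum_(i < m) _.
set Y := \sum_(i < m) v i ord0 ^+ 2.
set W := \sum_(i < m) w i ord0 ^+ 2.
have Y0 : 0 <= Y by exact: sumsq_ge0.
have W0 : 0 <= W by exact: sumsq_ge0.
have quad : forall lam : R, 0 <= lam ^+ 2 * Y - 2 * lam * P + W.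
  move=> lam.
  have -> : lam ^+ 2 * Y - 2 * lam * P + W = \sum_(i < m) (lam * v i ord0 - w i ord0) ^+ 2.
    rewrite /Y /P /W mulr_sumr [2 * lam * _]mulr_sumr -sumrB -big_split /=.
    apply: eq_bigr => i _. ring.
  by apply: sumr_ge0 => i _; rewrite sqr_ge0.
have P2 : P ^+ 2 <= Y * W.
  have [Yz|Ypos] := eqVneq Y 0.
    have vz := @sumsq0 m v Yz.
    have -> : P = 0 by rewrite /P big1 // => i _; rewrite vz mul0r.
    by rewrite expr0n /= -/Y Yz mul0r.
  have Yp : 0 < Y by rewrite lt_def Ypos Y0.
  have := quad (P / Y).
  have -> : (P / Y) ^+ 2 * Y - 2 * (P / Y) * P + W = W - P ^+ 2 / Y.
    field. by [].
  rewrite subr_ge0 ler_pdivrMr // => H. by rewrite mulrC.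
rewrite /enorm -sqrtrM //.
apply: (le_trans (ler_norm P)).
by rewrite -sqrtr_sqr ler_sqrt // mulr_ge0.
Qed.


Lemma enormD m (v w : 'cV[R]_m) : enorm (v + w) <= enorm v + enorm w.
Proof.
have e1 := enorm_ge0 v; have e2 := enorm_ge0 w.
rewrite {1}/enorm -(ger0_norm (addr_ge0 e1 e2)) -sqrtr_sqr ler_sqrt; last by rewrite sqr_ge0.
have -> : \sum_(i < m) (v + w) i ord0 ^+ 2 =
   \sum_(i < m) v i ord0 ^+ 2 + 2 * \sum_(i < m) v i ord0 * w i ord0 + \sum_(i < m) w i ord0 ^+ 2.
  rewrite mulr_sumr -!big_split /=; apply: eq_bigr => i _; rewrite mxE; ring.
rewrite -!enorm_sq.
have := CS v w. set P := \sum_(i < m) _ . move=> HP.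
rewrite sqrrD. lra.
Qed.

Lemma enormZ m (c : R) (v : 'cV[R]_m) : enorm (c *: v) = `|c| * enorm v.
Proof.
rewrite /enorm.
have -> : \sum_(i < m) (c *: v) i ord0 ^+ 2 = c ^+ 2 * \sum_(i < m) v i ord0 ^+ 2.
  rewrite mulr_sumr; apply: eq_bigr => i _; rewrite mxE; ring.
by rewrite sqrtrM ?sqr_ge0 // sqrtr_sqr.
Qed.

Lemma enormN m (v : 'cV[R]_m) : enorm (- v) = enorm v.
Proof. by rewrite -scaleN1r enormZ normrN normr1 mul1r. Qed.

Lemma comp_le m (v : 'cV[R]_m) (i : 'I_m) : `|v i ord0| <= enorm v.
Proof.
rewrite -sqrtr_sqr /enorm ler_sqrt; last exact: sumsq_ge0.
rewrite (bigD1 i) //= lerDl. by apply: sumr_ge0 => j _; rewrite sqr_ge0.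
Qed.

Lemma two_comp_le m (v : 'cV[R]_m) (i j : 'I_m) : i != j ->
  `|v i ord0| + `|v j ord0| <= Num.sqrt 2 * enorm v.
Proof.
move=> ij.
have s2 : 0 <= Num.sqrt (2:R) by apply: sqrtr_ge0.
rewrite -(ger0_norm (addr_ge0 (normr_ge0 (v i ord0)) (normr_ge0 (v j ord0)))).
rewrite -sqrtr_sqr /enorm -sqrtrM // ler_sqrt; last by rewrite mulr_ge0 // sumsq_ge0.
rewrite (bigD1 i) //= (bigD1 j) //=.
have H : 0 <= \sum_(k < m | (k != i) && (k != j)) v k ord0 ^+ 2.
  by apply: sumr_ge0 => k _; rewrite sqr_ge0.
move: H; set S := \sum_(k < m | _) _ => H.
have a2 : `|v i ord0| ^+ 2 = v i ord0 ^+ 2 by rewrite real_normK // num_real.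
have b2 : `|v j ord0| ^+ 2 = v j ord0 ^+ 2 by rewrite real_normK // num_real.
move: a2 b2; set a := `|v i ord0|; set b := `|v j ord0|; set a' := v i ord0; set b' := v j ord0 => a2 b2.
rewrite -a2 -b2. have := sqr_ge0 (a - b). rewrite sqrrB sqrrD. lra.
by rewrite eq_sym.
Qed.

Lemma sumsq_le_sqsum m (v : 'cV[R]_m) :
  \sum_(i < m) v i ord0 ^+ 2 <= (\sum_(i < m) `|v i ord0|) ^+ 2.
Proof.
rewrite expr2 mulr_suml; apply: ler_sum => i _.
rewrite -real_normK ?num_real // expr2 ler_wpM2l //.
by rewrite (bigD1 i) //= lerDl; apply: sumr_ge0 => j _.
Qed.

Lemma enorm_le_sum m (v : 'cV[R]_m) : enorm v <= \sum_(i < m) `|v i ord0|.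
Proof.
have H : 0 <= \sum_(i < m) `|v i ord0| by apply: sumr_ge0 => i _.
rewrite -(ger0_norm H) -sqrtr_sqr /enorm ler_sqrt ?sqr_ge0 //.
exact: sumsq_le_sqsum.
Qed.

Definition mxK m p (A : 'M[R]_(m, p)) := \sum_(i < m) \sum_(j < p) `|A i j|.

Lemma mxK_bound m p (A : 'M[R]_(m, p)) v : enorm (A *m v) <= mxK A * enorm v.
Proof.
apply: (le_trans (enorm_le_sum _)).
rewrite /mxK mulr_suml; apply: ler_sum => i _.
rewrite mxE mulr_suml; apply: (le_trans (ler_norm_sum _ _ _)); apply: ler_sum => j _.
by rewrite normrM ler_wpM2l // comp_le.
Qed.

Definition Sset m p (A : 'M[R]_(m, p)) :=
  [set enorm (A *m v) | v in [set v : 'cV[R]_p | enorm v <= 1]].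

Lemma Sset_has_sup m p (A : 'M[R]_(m, p)) : has_sup (Sset A).
Proof.
split.
  exists (enorm (A *m 0)); exists 0 => //=.
  rewrite /enorm big1 ?sqrtr0 // => i _; by rewrite mxE expr0n.
exists (mxK A) => z [v /= Hv <-].
apply: (le_trans (mxK_bound A v)).
rewrite -{2}(mulr1 (mxK A)) ler_wpM2l //.
by apply: sumr_ge0 => i _; apply: sumr_ge0 => j _.
Qed.

Lemma opnorm_bound m p (A : 'M[R]_(m, p)) v : enorm (A *m v) <= opnorm A * enorm v.
Proof.
have [e0|e0] := eqVneq (enorm v) 0.
  by apply: (le_trans (mxK_bound A v)); rewrite e0 !mulr0.
have ep : 0 < enorm v by rewrite lt_def e0 enorm_ge0.
pose v' := (enorm v)^-1 *: v.
have Hv' : enorm v' = 1 by rewrite /v' enormZ ger0_norm ?invr_ge0 ?enorm_ge0 // mulVf.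
have := sup_upper_bound (Sset_has_sup A) (x := enorm (A *m v')).
rewrite -/(opnorm A) => H.
have {}H : enorm (A *m v') <= opnorm A.
  by apply: H; exists v' => //=; rewrite Hv'.
move: H; rewrite /v' -scalemxAr enormZ ger0_norm ?invr_ge0 ?enorm_ge0 //.
rewrite mulrC -ler_pdivlMr ?invr_gt0 // invrK. by rewrite mulrC.
Qed.


Lemma comp_derive m (f : R -> 'cV[R]_m) (s : R) (df : 'cV[R]_m) (i : 'I_m) :
  is_derive s 1 f df -> is_derive s 1 (fun u => f u i ord0) (df i ord0).
Proof.
move=> [fd fv].
have dv : derivable (fun u => f u i ord0) s 1 by move/derivable_mxP: fd; apply.
apply: DeriveDef => //.
by rewrite -fv derive_mx // mxE.
Qed.

Lemma sumsq_cvg m (T : Type) (F : set_system T) (FF : Filter F) (z : T -> 'cV[R]_m)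
   (z0 w : 'cV[R]_m) :
  z x @[x --> F] --> z0 ->
  (\sum_(i < m) (z x i ord0 - w i ord0) ^+ 2) @[x --> F] -->
     \sum_(i < m) (z0 i ord0 - w i ord0) ^+ 2.
Proof.
move=> zc.
apply: (@cvg_big _ _ +%R 0 xpredT _ _ _ _ (fun i x => (z x i ord0 - w i ord0) ^+ 2)) => //.
  exact: pseudometric_normed_Zmodule.add_continuous.
move=> i _.
have ci : (z x i ord0) @[x --> F] --> z0 i ord0.
  exact: (cvg_comp _ _ zc (@coord_continuous R m 1 i ord0 z0)).
have cb : (z x i ord0 - w i ord0) @[x --> F] --> (z0 i ord0 - w i ord0).
  by apply: cvgB => //; exact: cvg_cst.
under eq_cvg do rewrite expr2.
rewrite expr2.
exact: cvgM.
Qed.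


Lemma isd_derivable (f : R -> R) (x df : R) : is_derive x 1 f df -> derivable f x 1.
Proof. by case. Qed.

Lemma isd_cont (f : R -> R) (x df : R) : is_derive x 1 f df -> {for x, continuous f}.
Proof.
move=> H. apply: differentiable_continuous. apply/derivable1_diffP. exact: isd_derivable H.
Qed.

Lemma enorm_diff_sq m (v w : 'cV[R]_m) :
  enorm (v - w) = Num.sqrt (\sum_(i < m) (v i ord0 - w i ord0) ^+ 2).
Proof. by rewrite /enorm; congr Num.sqrt; apply: eq_bigr => i _; rewrite !mxE. Qed.

Lemma gron_step m (z : R -> 'cV[R]_m) (A : 'M[R]_m) (b : 'cV[R]_m) (a t0 t t1 eps : R) :
  0 < a -> (forall v, enorm (A *m v) <= a * enorm v) -> t0 < t -> t < t1 ->
  (forall s, t0 < s < t1 -> is_derive s 1 z (A *m z s + b)) ->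
  z s @[s --> t0^'+] --> z t0 -> 0 < eps ->
  Num.sqrt (\sum_(i < m) (z t i ord0 - z t0 i ord0) ^+ 2 + eps ^+ 2) <=
    expR (a * (t - t0)) * (eps + enorm (A *m z t0 + b) / a) - enorm (A *m z t0 + b) / a.
Proof.
move=> a0 Ab t0t tt1 dz zc e0.
set c := enorm (A *m z t0 + b).
pose q := fun s => \sum_(i < m) (z s i ord0 - z t0 i ord0) ^+ 2.
pose w := fun s => Num.sqrt (q s + eps ^+ 2).
pose F := fun s => expR (- a * (s - t0)) * (w s + c / a).
have c0 : 0 <= c by exact: enorm_ge0.
have q0 s : 0 <= q s by apply: sumr_ge0 => i _; rewrite sqr_ge0.
have qe0 s : 0 < q s + eps ^+ 2 by apply: ltr_wpDl => //; rewrite exprn_gt0.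
pose dq s := \sum_(i < m) (2%:R * (z s i ord0 - z t0 i ord0) ^+ 1) *: (A *m z s + b) i ord0.
have Dq s : t0 < s < t1 -> is_derive s 1 q (dq s).
  move=> st.
  have Ei : forall i, is_derive s 1 (fun u => z u i ord0 - z t0 i ord0) ((A *m z s + b) i ord0).
    move=> i.
    have := is_deriveB (comp_derive i (dz s st)) (is_derive_cst (z t0 i ord0) s 1).
    by rewrite subr0.
  have Eq : q = \sum_(i < m) ((fun u => z u i ord0 - z t0 i ord0) ^+ 2).
    by rewrite fct_sumE; apply: funext => u; apply: eq_bigr => i _.
  rewrite Eq /dq.
  apply: is_derive_sum => i.
  exact: is_deriveX.
pose dw s := (2 * Num.sqrt (q s + eps ^+ 2))^-1 * dq s.
have Dw s : t0 < s < t1 -> is_derive s 1 w (dw s).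
  move=> st.
  have H1 : is_derive s 1 (fun u => q u + eps ^+ 2) (dq s).
    have := is_deriveD (Dq s st) (is_derive_cst (eps ^+ 2) s 1).
    by rewrite addr0.
  exact: (@is_derive1_comp _ Num.sqrt (fun u => q u + eps ^+ 2) s _ _ (is_derive1_sqrt (qe0 s)) H1).
pose E := fun s => expR (- a * (s - t0)).
have DE (s : R) : is_derive s 1 E (expR (- a * (s - t0)) * (- a)).
  have H1 : is_derive s 1 (fun u => - a * (u - t0)) (- a).
    have := is_deriveZ (- a) (is_deriveB (is_derive_id s 1) (is_derive_cst t0 s 1)).
    by rewrite subr0 /GRing.scale /= mulr1.
  exact: (@is_derive1_comp _ expR (fun u => - a * (u - t0)) s _ _ (is_derive_expR _) H1).
pose dF s := E s * dw s + (w s + c / a) * (expR (- a * (s - t0)) * (- a)).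
have DF s : t0 < s < t1 -> is_derive s 1 F (dF s).
  move=> st.
  have H := is_deriveM (DE s) (is_deriveD (Dw s st) (is_derive_cst (c / a) s 1)).
  rewrite addr0 in H.
  apply: is_derive_eq H _.
  by rewrite /dF /GRing.scale /=.
have dFle s : t0 < s < t1 -> dF s <= 0.
  move=> st.
  set Y := z s - z t0.
  set dzv := A *m z s + b.
  have hY : enorm Y = Num.sqrt (q s) by rewrite /Y enorm_diff_sq.
  have Yw : enorm Y <= w s by rewrite hY ler_sqrt ?lerDl ?sqr_ge0 // ltW.
  have Y0 : 0 <= enorm Y := enorm_ge0 Y.
  have wp : 0 < w s by rewrite sqrtr_gt0.
  have hdq : dq s = 2 * \sum_(i < m) Y i ord0 * dzv i ord0.
    rewrite /dq mulr_sumr; apply: eq_bigr => i _.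
    by rewrite /Y !mxE /GRing.scale /= expr1 mulrA.
  have cs := CS Y dzv.
  have hdz : enorm dzv <= a * enorm Y + c.
    have -> : dzv = A *m Y + (A *m z t0 + b).
      by rewrite /dzv /Y mulmxBr addrA subrK.
    apply: (le_trans (enormD _ _)).
    by rewrite lerD2r Ab.
  have dwle : dw s <= a * w s + c.
    rewrite /dw hdq -/(w s).
    set S := \sum_(i < m) _.
    have -> : (2 * w s)^-1 * (2 * S) = S / w s.
      field. by rewrite lt0r_neq0.
    rewrite ler_pdivrMr //.
    apply: (le_trans cs). rewrite [_ * w s]mulrC.
    have dz0 : 0 <= enorm dzv := enorm_ge0 dzv.
    have : enorm dzv <= a * w s + c.
      apply: (le_trans hdz). rewrite lerD2r. by rewrite ler_pM2l.
    move=> h2.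
    have a1 : 0 <= a * w s + c by rewrite addr_ge0 // mulr_ge0 // ltW.
    exact: ler_pM.
  rewrite /dF /E.
  have ep : 0 < expR (- a * (s - t0)) := expR_gt0 _.
  have -> : expR (- a * (s - t0)) * dw s + (w s + c / a) * (expR (- a * (s - t0)) * - a)
      = expR (- a * (s - t0)) * (dw s - (a * w s + c)).
    field. by rewrite lt0r_neq0.
  by rewrite pmulr_rle0 // subr_le0.
have cE : {for t0, continuous E}.
  exact: isd_cont (DE t0).
have cw : w x @[x --> t0^'+] --> w t0.
  have hq : (q x + eps ^+ 2) @[x --> t0^'+] --> (q t0 + eps ^+ 2).
    apply: cvgD; last exact: cvg_cst.
    rewrite /q; apply: sumsq_cvg => //.
  exact: (cvg_comp _ _ hq (@sqrt_continuous R _)).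
have cF : {within `[t0, t], continuous F}.
  apply/continuous_within_itvP => //; split.
  - move=> s; rewrite in_itv /= => /andP[s1 s2].
    have st : t0 < s < t1 by rewrite s1 (lt_trans s2 tt1).
    exact: isd_cont (DF s st).
  - have h1 : E x @[x --> t0^'+] --> E t0 by apply: cvg_at_right_filter; exact: cE.
    have h2 : (w x + c / a) @[x --> t0^'+] --> (w t0 + c / a).
      by apply: cvgD => //; exact: cvg_cst.
    exact: (cvgM h1 h2).
  - apply: cvg_at_left_filter.
    have st : t0 < t < t1 by rewrite t0t tt1.
    exact: isd_cont (DF t st).
have key : F t <= F t0.
  apply: (ler0_derive1_le_cc (f := F) (a := t0) (b := t)).
  - move=> s; rewrite in_itv /= => /andP[s1 s2].
    have st : t0 < s < t1 by rewrite s1 (lt_trans s2 tt1).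
    exact: isd_derivable (DF s st).
  - move=> s; rewrite in_itv /= => /andP[s1 s2].
    have st : t0 < s < t1 by rewrite s1 (lt_trans s2 tt1).
    by rewrite derive1E (@derive_val _ _ _ _ _ _ _ (DF s st)) dFle.
  - exact: cF.
  - by rewrite in_itv /= lexx ltW.
  - by rewrite in_itv /= lexx ltW.
  - exact: ltW.
have Ft0 : F t0 = eps + c / a.
  rewrite /F /w /q subrr mulr0 expR0 mul1r big1 ?add0r ?sqrtr_sqr ?gtr0_norm //.
  by move=> i _; rewrite subrr expr0n.
rewrite Ft0 /F /w -/(q t) in key.
have ep : 0 < expR (a * (t - t0)) := expR_gt0 _.
rewrite lerBrDr -ler_pdivrMl //.
move: key. rewrite mulNr expRN. rewrite mulrC. by [].
Qed.


Lemma gronwall m (z : R -> 'cV[R]_m) (A : 'M[R]_m) (b : 'cV[R]_m) (a t0 t t1 : R) :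
  0 < a -> (forall v, enorm (A *m v) <= a * enorm v) -> t0 < t -> t < t1 ->
  (forall s, t0 < s < t1 -> is_derive s 1 z (A *m z s + b)) ->
  z s @[s --> t0^'+] --> z t0 ->
  enorm (z t - z t0) <= enorm (A *m z t0 + b) / a * (expR (a * (t - t0)) - 1).
Proof.
move=> a0 Ab t0t tt1 dz zc.
apply/ler_addgt0Pr => e e0.
have Ep : 0 < expR (a * (t - t0)) := expR_gt0 _.
have ee : 0 < e / expR (a * (t - t0)) by rewrite divr_gt0.
have H := @gron_step m z A b a t0 t t1 (e / expR (a * (t - t0))) a0 Ab t0t tt1 dz zc ee.
rewrite enorm_diff_sq.
apply: le_trans (le_trans (_ : _ <= Num.sqrt (\sum_(i < m) (z t i ord0 - z t0 i ord0) ^+ 2 + (e / expR (a * (t - t0))) ^+ 2)) H) _.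
  rewrite ler_sqrt ?lerDl ?sqr_ge0 //.
  by apply: addr_ge0; [apply: sumr_ge0 => i _|]; rewrite sqr_ge0.
rewrite mulrDr mulrCA mulfV ?mulr1; last by rewrite lt0r_neq0.
by rewrite le_eqVlt; apply/orP; left; apply/eqP; ring.
Qed.

End Helpers.

Lemma idx_facts (n i : nat) : (2 <= i <= n)%N ->
  (pidx i.-1 < (6 * n).+3)%N /\ (pidx i < (6 * n).+3)%N /\ pidx i.-1 != pidx i.
Proof.
move=> /andP[hi1 hi2].
have e1 : (i.-1 == 0)%N = false by apply/eqP; lia.
have e2 : (i == 0)%N = false by apply/eqP; lia.
rewrite /pidx e1 e2 /vidx.
split; first lia. split; first lia. apply/eqP; lia.
Qed.

Theorem theorem1 (R : realType) (n : nat) (tau h kp kd r T : R) (L : nat -> R)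
    (l : nat -> nat -> bool)
    (tbrake gamma eta : R) (pb vb ab : R -> R) (ts : R)
    (x : R -> 'cV[R]_(sdim n)) (tt : nat -> R) (alpha : R) :
  (2 <= n)%N -> 0 < tau -> 0 < h -> 0 < r -> 0 < T ->
  (forall i : nat, (1 <= i <= n)%N -> 0 < L i) ->
  (* braking model parameters *)
  0 < tbrake -> 0 < gamma -> 0 < eta -> eta <= 1 / (4 * tau) ->
  (* (pb, vb, ab) solves the continuous-time braking model *)
  {within [set t : R | 0 <= t], continuous pb} ->
  {within [set t : R | 0 <= t], continuous vb} ->
  {within [set t : R | 0 <= t], continuous ab} ->
  (forall t : R, 0 < t -> t != tbrake ->
     is_derive t 1 pb (vb t) /\ is_derive t 1 vb (ab t) /\
     is_derive t 1 ab ((- ab t +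
        (if t < tbrake then 0 else Num.max (- gamma) (- eta * vb t))) / tau)) ->
  (* ts = t^* = min { t >= tbrake | - eta * vb t >= - gamma } *)
  tbrake <= ts -> - gamma <= - eta * vb ts ->
  (forall t : R, tbrake <= t < ts -> - eta * vb t < - gamma) ->
  (* platoon dynamics  dx/dt = Ac x + Bc u  with sampled/held inputs *)
  {within [set t : R | 0 <= t], continuous x} ->
  (forall t : R, 0 < t -> (forall j : nat, t != j%:R * T) ->
     is_derive t 1 x (Ac n tau h kp kd *m x t +
                      Bc n tau h *m uin x tau T tbrake gamma eta ts (ab ts) l t)) ->
  (* e_i and its derivative as state components *)
  (forall t : R, 0 <= t -> forall i : nat, (1 <= i <= n)%N ->
     vcomp (x t) (e_idx i) =
       vcomp (x t) (pidx i.-1) - vcomp (x t) (pidx i) - L i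
       - (r + h * vcomp (x t) (v_idx i)) /\
     vcomp (x t) (ed_idx i) =
       vcomp (x t) (v_idx i.-1) - vcomp (x t) (v_idx i) - h * vcomp (x t) (a_idx i)) ->
  (* simulation time instants, with S contained in T *)
  0 <= tt 0%N -> (forall k : nat, tt k < tt k.+1) ->
  (forall j : nat, exists k : nat, tt k = j%:R * T) ->
  0 < alpha ->
  (forall k : nat,
     let D := Num.sqrt 2 * (enorm (x (tt k)) +
                enorm (Bc n tau h *m uin x tau T tbrake gamma eta ts (ab ts) l (tt k))
                / opnorm (Ac n tau h kp kd)) in
     0 < D -> tt k.+1 - tt k <= ln (alpha / D + 1) / opnorm (Ac n tau h kp kd)) ->
  forall (k i : nat) (t : R), (2 <= i <= n)%N -> tt k <= t < tt k.+1 ->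
    `|dgap x L i t - dgap x L i (tt k)| <= alpha.
Proof.
move=> hn tau0 h0 r0 T0 L0 tb0 g0 e0 etale cpb cvb cab dbr ts1 ts2 ts3 cx dx econ
  tt0 ttinc Scov alpha0 Hstep k i t hi /andP[tk tk1].
set A := Ac n tau h kp kd.
set B := Bc n tau h.
set U := uin x tau T tbrake gamma eta ts (ab ts) l.
have ttle : forall p q, (p <= q)%N -> tt p <= tt q.
  move=> p q /subnK <-. elim: (q - p)%N => [|d IH]; first by rewrite add0n.
  rewrite addSn. exact: le_trans IH (ltW (ttinc _)).
have ttge0 : forall p, 0 <= tt p by move=> p; apply: le_trans tt0 (ttle _ _ (leq0n p)).
have a1 : 1 <= opnorm A.
  pose v : 'cV[R]_(sdim n) := \col_j (if (j : nat) == 1%N then 1 else 0).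
  have ev : enorm v = 1.
    rewrite /enorm (bigD1 (inord 1)) //= big1 => [|j hj].
      by rewrite !mxE inordK // eqxx expr1n addr0 sqrtr1.
    rewrite !mxE ifN ?expr0n //.
    by apply: contra hj => /eqP hj; apply/eqP/val_inj; rewrite /= inordK // hj.
  have Av : (A *m v) (inord 0) ord0 = 1.
    rewrite mxE (bigD1 (inord 1)) //= big1 ?addr0.
      by rewrite !mxE !inordK //= mulr1.
    move=> j hj; rewrite !mxE ifN ?mulr0 //.
    by apply: contra hj => /eqP hj; apply/eqP/val_inj; rewrite /= inordK // hj.
  have h1 : enorm (A *m v) <= opnorm A.
    have H := sup_upper_bound (Sset_has_sup A) (x := enorm (A *m v)).
    apply: H. by exists v => //=; rewrite ev.
  apply: le_trans h1.
  by have := comp_le (A *m v) (inord 0); rewrite Av normr1.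
have a0 : 0 < opnorm A by apply: lt_le_trans ltr01 a1.
have [teq|tgt] := eqVneq t (tt k).
  by rewrite teq subrr normr0 ltW.
have tkt : tt k < t by rewrite lt_def tgt tk.
have nosamp : forall j : nat, ~ (tt k < j%:R * T < tt k.+1).
  move=> j /andP[h1 h2]; have [k' hk'] := Scov j. rewrite -hk' in h1 h2.
  case: (leqP k' k) => hk.
    by have := ttle _ _ hk; lra.
  by have := ttle _ _ hk; lra.
have sidxc : forall s, tt k <= s < tt k.+1 -> sidx T s = sidx T (tt k).
  move=> s /andP[s1 s2].
  set j := sidx T (tt k).
  have hj : j%:R <= tt k / T < j.+1%:R by apply: truncn_itv; rewrite divr_ge0 // ltW.
  have s0 : 0 <= s / T by rewrite divr_ge0 ?(le_trans (ttge0 k) s1) // ltW.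
  rewrite /sidx; apply/eqP; rewrite truncn_eq //.
  move: hj => /andP[hj1 hj2].
  apply/andP; split.
    apply: le_trans hj1 _. by rewrite ler_pM2r ?invr_gt0.
  case: (ltP (s / T) j.+1%:R) => // hc.
  exfalso; apply: (nosamp j.+1).
  rewrite ltr_pdivrMr // in hj2.
  rewrite ler_pdivlMr // in hc.
  apply/andP; split => //. by apply: le_lt_trans hc s2.
have Us : forall s, tt k <= s < tt k.+1 -> U s = U (tt k).
  by move=> s hs; rewrite /U /uin (sidxc s hs).
have dz : forall s, tt k < s < tt k.+1 -> is_derive s 1 x (A *m x s + B *m U (tt k)).
  move=> s /andP[s1 s2]. rewrite -(Us s); last by rewrite (ltW s1) s2.
  apply: dx.
    exact: le_lt_trans (ttge0 k) s1.
  move=> j; apply/negP => /eqP hj. apply: (nosamp j). by rewrite -hj s1 s2.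
have zc : x s @[s --> (tt k)^'+] --> x (tt k).
  have cw : {within `[tt k, t], continuous x}.
    apply: continuous_subspaceW cx. move=> s /=; rewrite in_itv /= => /andP[s1 _].
    exact: le_trans (ttge0 k) s1.
  by have [_ ? _] := (continuous_within_itvP _ tkt).1 cw.
have G := @gronwall R _ x A (B *m U (tt k)) (opnorm A) (tt k) t (tt k.+1) a0 (opnorm_bound A) tkt tk1 dz zc.
set C := enorm (x (tt k)) + enorm (B *m U (tt k)) / opnorm A.
have an0 : opnorm A != 0 by rewrite lt0r_neq0.
have hb : enorm (A *m x (tt k) + B *m U (tt k)) <= opnorm A * C.
  apply: le_trans (enormD _ _) _.
  rewrite /C mulrDr mulrCA mulfV // mulr1 lerD2r.
  exact: opnorm_bound.
have C0 : 0 <= C by rewrite /C addr_ge0 ?enorm_ge0 // divr_ge0 ?enorm_ge0 // ltW.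
set E := expR (opnorm A * (t - tt k)).
have E1 : 1 <= E.
  apply: le_trans (expR_ge1Dx _). rewrite lerDl; apply: mulr_ge0; [exact: ltW| rewrite subr_ge0; exact: ltW].
have G2 : enorm (x t - x (tt k)) <= C * (E - 1).
  apply: le_trans G _. apply: ler_wpM2r; first by rewrite subr_ge0.
  by rewrite ler_pdivrMr // mulrC.
have s2 : 0 < Num.sqrt (2:R) by rewrite sqrtr_gt0.
have key : Num.sqrt 2 * enorm (x t - x (tt k)) <= alpha.
  case: (ltP 0 (Num.sqrt 2 * C)) => hD.
    have H : tt k.+1 - tt k <= ln (alpha / (Num.sqrt 2 * C) + 1) / opnorm A := Hstep k hD.
    have pos : 0 < alpha / (Num.sqrt 2 * C) + 1 by rewrite ltr_wpDl // ?divr_ge0 // ltW.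
    have H2 : opnorm A * (t - tt k) <= ln (alpha / (Num.sqrt 2 * C) + 1).
      rewrite mulrC -ler_pdivlMr //.
      apply: le_trans H. by rewrite lerD2r ltW.
    have H3 : E <= alpha / (Num.sqrt 2 * C) + 1.
      by rewrite /E -(lnK (x := alpha / (Num.sqrt 2 * C) + 1)) ?ler_expR // posrE.
    have H4 : C * (E - 1) <= C * (alpha / (Num.sqrt 2 * C)).
      by apply: ler_wpM2l => //; rewrite lerBlDr.
    have H5 : Num.sqrt 2 * (C * (alpha / (Num.sqrt 2 * C))) = alpha.
      have Cp : 0 < C by move: hD; rewrite pmulr_rgt0.
      field. by rewrite !lt0r_neq0.
    rewrite -H5 ler_pM2l //. exact: le_trans G2 H4.
  have Cz : C = 0.
    apply/eqP; rewrite eq_le C0 andbT.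
    by rewrite -(pmulr_rle0 _ s2).
  rewrite Cz mul0r in G2.
  apply: le_trans (ltW alpha0).
  by rewrite pmulr_rle0.
rewrite /dgap.
set p1 := pidx i.-1. set p2 := pidx i.
have [hp1 [hp2 hp12]] := @idx_facts n i hi.
have -> : vcomp (x t) p1 - vcomp (x t) p2 - L i - (vcomp (x (tt k)) p1 - vcomp (x (tt k)) p2 - L i)
   = (x t - x (tt k)) (inord p1) ord0 - (x t - x (tt k)) (inord p2) ord0.
  rewrite /vcomp !mxE. ring.
apply: (le_trans (ler_normB _ _)).
apply: (le_trans (two_comp_le _ _ _ _) key).
apply: contra hp12 => /eqP/(congr1 val) /=.
by rewrite !inordK // => /eqP.
Qed.
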